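(* $\mathrm{GL}_3(\mathbb{F}_5)$ contains exactly one conjugacy class of subgroups isomorphic to $A_5\times C_2$. *)

(* Defs.v *)
From mathcomp Require Import all_boot all_algebra all_fingroup all_solvable.
Set Implicit Arguments. Unset Strict Implicit. Unset Printing Implicit Defensive.

Definition A5xC2 : {group ({perm 'I_5} * 'Z_2)%type} :=
  setX_group ('Alt_('I_5))%G (Zp 2)%G.

(* Main.v *)
Require Import Defs.
From mathcomp Require Import all_boot all_algebra all_fingroup all_solvable all_field.

From Stdlib Require List.
Set Implicit Arguments. Unset Strict Implicit. Unset Printing Implicit Defensive.
Inductive Fv := f0 | f1 | f2 | f3 | f4.
Definition addF (a b : Fv) : Fv :=
  match a, b with
  | f0, f0 => f0
  | f0, f1 => f1
  | f0, f2 => f2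
  | f0, f3 => f3
  | f0, f4 => f4
  | f1, f0 => f1
  | f1, f1 => f2
  | f1, f2 => f3
  | f1, f3 => f4
  | f1, f4 => f0
  | f2, f0 => f2
  | f2, f1 => f3
  | f2, f2 => f4
  | f2, f3 => f0
  | f2, f4 => f1
  | f3, f0 => f3
  | f3, f1 => f4
  | f3, f2 => f0
  | f3, f3 => f1
  | f3, f4 => f2
  | f4, f0 => f4
  | f4, f1 => f0
  | f4, f2 => f1
  | f4, f3 => f2
  | f4, f4 => f3
  end.
Definition mulF (a b : Fv) : Fv :=
  match a, b with
  | f0, f0 => f0
  | f0, f1 => f0
  | f0, f2 => f0
  | f0, f3 => f0
  | f0, f4 => f0
  | f1, f0 => f0
  | f1, f1 => f1
  | f1, f2 => f2
  | f1, f3 => f3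
  | f1, f4 => f4
  | f2, f0 => f0
  | f2, f1 => f2
  | f2, f2 => f4
  | f2, f3 => f1
  | f2, f4 => f3
  | f3, f0 => f0
  | f3, f1 => f3
  | f3, f2 => f1
  | f3, f3 => f4
  | f3, f4 => f2
  | f4, f0 => f0
  | f4, f1 => f4
  | f4, f2 => f3
  | f4, f3 => f2
  | f4, f4 => f1
  end.
Definition oppF (a : Fv) : Fv := match a with f0 => f0 | f1 => f4 | f2 => f3 | f3 => f2 | f4 => f1 end.
Definition eqF (a b : Fv) : bool := match a, b with f0, f0 => true | f1, f1 => true | f2, f2 => true | f3, f3 => true | f4, f4 => true | _, _ => false end.
Record cm := CM { e00 : Fv; e01 : Fv; e02 : Fv; e10 : Fv; e11 : Fv; e12 : Fv; e20 : Fv; e21 : Fv; e22 : Fv }.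
Definition dot3 a0 a1 a2 b0 b1 b2 := addF (addF (mulF a0 b0) (mulF a1 b1)) (mulF a2 b2).
Definition cmul (A B : cm) : cm :=
  CM (dot3 (e00 A) (e01 A) (e02 A) (e00 B) (e10 B) (e20 B))
     (dot3 (e00 A) (e01 A) (e02 A) (e01 B) (e11 B) (e21 B))
     (dot3 (e00 A) (e01 A) (e02 A) (e02 B) (e12 B) (e22 B))
     (dot3 (e10 A) (e11 A) (e12 A) (e00 B) (e10 B) (e20 B))
     (dot3 (e10 A) (e11 A) (e12 A) (e01 B) (e11 B) (e21 B))
     (dot3 (e10 A) (e11 A) (e12 A) (e02 B) (e12 B) (e22 B))
     (dot3 (e20 A) (e21 A) (e22 A) (e00 B) (e10 B) (e20 B))
     (dot3 (e20 A) (e21 A) (e22 A) (e01 B) (e11 B) (e21 B))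
     (dot3 (e20 A) (e21 A) (e22 A) (e02 B) (e12 B) (e22 B)).
Definition ceq (A B : cm) : bool :=
  eqF (e00 A) (e00 B) && eqF (e01 A) (e01 B) && eqF (e02 A) (e02 B) &&
  eqF (e10 A) (e10 B) && eqF (e11 A) (e11 B) && eqF (e12 A) (e12 B) &&
  eqF (e20 A) (e20 B) && eqF (e21 A) (e21 B) && eqF (e22 A) (e22 B).
Definition cI := CM f1 f0 f0 f0 f1 f0 f0 f0 f1.
Definition D1 := CM f1 f0 f0 f0 f4 f0 f0 f0 f4.
Definition D2 := CM f1 f0 f0 f0 f1 f0 f0 f0 f4.
Definition mI := CM f4 f0 f0 f0 f4 f0 f0 f0 f4.
Definition forallF (p : Fv -> bool) := p f0 && p f1 && p f2 && p f3 && p f4.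
Definition forallM (p : cm -> bool) :=
  forallF (fun a => forallF (fun b => forallF (fun c => forallF (fun d =>
  forallF (fun e => forallF (fun f => forallF (fun g => forallF (fun h =>
  forallF (fun i => p (CM a b c d e f g h i)))))))))).
Definition sub2 a b c d := addF (mulF a d) (oppF (mulF b c)).
Definition cdet (A : cm) : Fv :=
  addF (addF (mulF (e00 A) (sub2 (e11 A) (e12 A) (e21 A) (e22 A)))
             (oppF (mulF (e01 A) (sub2 (e10 A) (e12 A) (e20 A) (e22 A)))))
       (mulF (e02 A) (sub2 (e10 A) (e11 A) (e20 A) (e21 A))).
Definition invF (a : Fv) := mulF a (mulF a a).
Definition cinv (A : cm) : cm :=
  let d := invF (cdet A) in
  CM (mulF d (sub2 (e11 A) (e12 A) (e21 A) (e22 A)))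
     (mulF d (oppF (sub2 (e01 A) (e02 A) (e21 A) (e22 A))))
     (mulF d (sub2 (e01 A) (e02 A) (e11 A) (e12 A)))
     (mulF d (oppF (sub2 (e10 A) (e12 A) (e20 A) (e22 A))))
     (mulF d (sub2 (e00 A) (e02 A) (e20 A) (e22 A)))
     (mulF d (oppF (sub2 (e00 A) (e02 A) (e10 A) (e12 A))))
     (mulF d (sub2 (e10 A) (e11 A) (e20 A) (e21 A)))
     (mulF d (oppF (sub2 (e00 A) (e01 A) (e20 A) (e21 A))))
     (mulF d (sub2 (e00 A) (e01 A) (e10 A) (e11 A))).
Definition nz (a : Fv) := negb (eqF a f0).
Definition allF := f0 :: f1 :: f2 :: f3 :: f4 :: nil.
Definition allv : list (Fv * Fv * Fv) :=
  List.flat_map (fun a => List.flat_map (fun b => List.map (fun c => (a, b, c)) allF) allF) allF.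
Fixpoint findl {T} (p : T -> bool) (l : list T) : option T :=
  match l with nil => None | x :: r => if p x then Some x else findl p r end.
Definition mulv (M : cm) (v : Fv * Fv * Fv) :=
  let '(a, b, c) := v in
  (dot3 (e00 M) (e01 M) (e02 M) a b c, dot3 (e10 M) (e11 M) (e12 M) a b c,
   dot3 (e20 M) (e21 M) (e22 M) a b c).
Definition scv (d : Fv) (v : Fv * Fv * Fv) := let '(a, b, c) := v in (mulF d a, mulF d b, mulF d c).
Definition eqv (v w : Fv * Fv * Fv) :=
  let '(a, b, c) := v in let '(a', b', c') := w in eqF a a' && eqF b b' && eqF c c'.
Definition cols (u v w : Fv * Fv * Fv) :=
  let '(a, b, c) := u in let '(a', b', c') := v in let '(a'', b'', c'') := w in
  CM a a' a'' b b' b'' c c' c''.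
Definition eigen (M : cm) d (v : Fv * Fv * Fv) := eqv (mulv M v) (scv d v).
Definition find_diag (M : cm) (d1 d2 d3 : Fv) : option cm :=
  match findl (fun v => negb (eqv v (f0, f0, f0)) && eigen M d1 v) allv with
  | None => None
  | Some c1 =>
    match findl (fun v => eigen M d2 v && nz (cdet (cols c1 v (f1, f0, f0)) ) ) allv with
    | None =>
      match findl (fun v => eigen M d2 v && nz (cdet (cols c1 v (f0, f1, f0)) ) ) allv with
      | None =>
       match findl (fun v => eigen M d2 v && nz (cdet (cols c1 v (f0, f0, f1)) ) ) allv with
       | None => None
       | Some c2 => match findl (fun v => eigen M d3 v && nz (cdet (cols c1 c2 v))) allv with
                    | None => None | Some c3 => Some (cols c1 c2 c3) end
       end
      | Some c2 => match findl (fun v => eigen M d3 v && nz (cdet (cols c1 c2 v))) allv with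
                   | None => None | Some c3 => Some (cols c1 c2 c3) end
      end
    | Some c2 => match findl (fun v => eigen M d3 v && nz (cdet (cols c1 c2 v))) allv with
                 | None => None | Some c3 => Some (cols c1 c2 c3) end
    end
  end.
Definition good_inv (M P : cm) :=
  let X := cmul (cmul (cinv P) M) P in
  ceq (cmul P (cinv P)) cI && (ceq X D1 || ceq X D2 || ceq X mI).
Definition chk_inv (M : cm) :=
  match find_diag M f1 f4 f4 with
  | Some P => good_inv M P
  | None => match find_diag M f1 f1 f4 with
            | Some P => good_inv M P
            | None => match find_diag M f4 f4 f4 with Some P => good_inv M P | None => false end
            end
  end.
Definition g1c := CM f0 f1 f0 f1 f0 f0 f4 f4 f4.
Definition g2c := CM f0 f0 f4 f0 f1 f4 f1 f0 f4.
Definition P1 := CM f1 f0 f1 f1 f0 f4 f4 f1 f0.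
Definition g2p := cmul (cmul (cinv P1) g2c) P1.
Definition blocks : list cm :=
  List.flat_map (fun a => List.flat_map (fun b => List.flat_map (fun c => List.map (fun d =>
    CM f1 f0 f0 f0 a b f0 c d) allF) allF) allF) allF.
Definition chk_conj (M : cm) :=
  match findl (fun C => nz (cdet C) && ceq (cmul M C) (cmul C g2p)) blocks with
  | Some C => let Q := cmul C (cinv P1) in let Qi := cmul P1 (cinv C) in
      ceq (cmul Q Qi) cI && ceq (cmul (cmul Qi D1) Q) g1c && ceq (cmul (cmul Qi M) Q) g2c
  | None => false
  end.
Definition pow5 (X : cm) := cmul X (cmul X (cmul X (cmul X X))).
Definition is_scal (M : cm) :=
  eqF (e01 M) f0 && eqF (e02 M) f0 && eqF (e10 M) f0 && eqF (e12 M) f0 &&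
  eqF (e20 M) f0 && eqF (e21 M) f0 && eqF (e00 M) (e11 M) && eqF (e00 M) (e22 M).
Definition chk2b (D M : cm) :=
  if ceq (pow5 (cmul D M)) cI then (if ceq D D1 then chk_conj M else false) else true.
Definition chk2all (M : cm) :=
  if ceq M cI then true else
  if ceq (cmul M (cmul M M)) cI then
    (if chk2b D1 M then if chk2b D2 M then chk2b mI M else false else false)
  else true.
Definition chk3 (M : cm) :=
  if ceq (cmul M g1c) (cmul g1c M) then (if ceq (cmul M g2c) (cmul g2c M) then is_scal M else true) else true.
Definition chk1 (M : cm) := if ceq M cI then true else if ceq (cmul M M) cI then chk_inv M else true.
Definition chk (M : cm) := if chk1 M then if chk2all M then chk3 M else false else false.

Lemma eqF_eq a b : eqF a b = true -> a = b.
Proof. by case: a; case: b. Qed.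
Lemma eqF_refl a : eqF a a = true.
Proof. by case: a. Qed.
Lemma ceq_eq A B : ceq A B = true -> A = B.
Proof.
case: A => a0 a1 a2 a3 a4 a5 a6 a7 a8; case: B => b0 b1 b2 b3 b4 b5 b6 b7 b8.
rewrite /ceq /= => H; repeat match goal with H : (_ && _) = true |- _ => apply andb_prop in H; destruct H end.
repeat match goal with H : eqF _ _ = true |- _ => apply eqF_eq in H; subst end.
reflexivity.
Qed.
Lemma ceq_refl A : ceq A A = true.
Proof. by case: A => ? ? ? ? ? ? ? ? ?; rewrite /ceq /= !eqF_refl. Qed.
Lemma forallF_spec p : forallF p = true -> forall a, p a = true.
Proof. by rewrite /forallF => /andP[/andP[/andP[/andP[? ?] ?] ?] ?] []. Qed.
Lemma forallM_spec p : forallM p = true -> forall M, p M = true.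
Proof.
move=> H [a b c d e f g h i].
exact: (forallF_spec (forallF_spec (forallF_spec (forallF_spec (forallF_spec
  (forallF_spec (forallF_spec (forallF_spec (forallF_spec H a) b) c) d) e) f) g) h) i).
Qed.
Lemma chk_true : forallM chk = true.
Proof. vm_compute. reflexivity. Qed.
Lemma chk_all M : chk M = true.
Proof. exact: forallM_spec chk_true M. Qed.

Lemma ceq_ne M : M <> cI -> ceq M cI = false.
Proof. by move=> H; case E: (ceq M cI) => //; move/ceq_eq: E. Qed.

Lemma P1spec M : M <> cI -> cmul M M = cI ->
  exists P, cmul P (cinv P) = cI /\
    (cmul (cmul (cinv P) M) P = D1 \/ cmul (cmul (cinv P) M) P = D2 \/
     cmul (cmul (cinv P) M) P = mI).
Proof.
move=> H1 H2; have := chk_all M; rewrite /chk /chk1 ceq_ne // H2 ceq_refl.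
have good : forall P, good_inv M P = true -> exists P, cmul P (cinv P) = cI /\
    (cmul (cmul (cinv P) M) P = D1 \/ cmul (cmul (cinv P) M) P = D2 \/
     cmul (cmul (cinv P) M) P = mI).
  move=> P; rewrite /good_inv => /andP[/ceq_eq E] /orP[/orP[]|] /ceq_eq E'; exists P; tauto.
rewrite /chk_inv.
case: (find_diag M f1 f4 f4) => [P|]; first by case E: (good_inv M P) => // _; exact: good E.
case: (find_diag M f1 f1 f4) => [P|]; first by case E: (good_inv M P) => // _; exact: good E.
case: (find_diag M f4 f4 f4) => [P|] //; by case E: (good_inv M P) => // _; exact: good E.
Qed.

Lemma P2spec D M : M <> cI -> cmul M (cmul M M) = cI -> pow5 (cmul D M) = cI ->
  (D = D1 \/ D = D2 \/ D = mI) ->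
  D = D1 /\ exists Q Qi, cmul Q Qi = cI /\ cmul (cmul Qi D1) Q = g1c /\ cmul (cmul Qi M) Q = g2c.
Proof.
move=> H1 H2 H3 HD.
have HD' : chk2b D M = true.
  have := chk_all M; rewrite /chk; case: (chk1 M) => //.
  rewrite /chk2all ceq_ne // H2 ceq_refl.
  case: HD => [->|[->|->]]; case: (chk2b D1 M) => //; case: (chk2b D2 M) => //;
    case: (chk2b mI M) => //.
move: HD'; rewrite /chk2b H3 ceq_refl; case E: (ceq D D1) => //; move/ceq_eq: E => ->.
rewrite /chk_conj; case: findl => // C.
move=> /andP[/andP[/ceq_eq E1 /ceq_eq E2] /ceq_eq E3]; split => //.
by do 2 eexists; split; [exact E1|split; [exact E2|exact E3]].
Qed.

Lemma P3spec M : cmul M g1c = cmul g1c M -> cmul M g2c = cmul g2c M ->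
  exists a, M = CM a f0 f0 f0 a f0 f0 f0 a.
Proof.
move=> H1 H2; have := chk_all M.
rewrite /chk; case: (chk1 M) => //; case: (chk2all M) => //.
rewrite /chk3 H1 H2 !ceq_refl.
case: M {H1 H2} => a b c d e f g h i; rewrite /is_scal /= => H.
repeat match goal with H : (_ && _) = true |- _ => apply andb_prop in H; destruct H end.
repeat match goal with H : eqF _ _ = true |- _ => apply eqF_eq in H; subst end.
by eexists; reflexivity.
Qed.

From mathcomp Require Import ring.

Import GRing.Theory.
Local Open Scope ring_scope.

Definition toF (x : 'F_5) : Fv :=
  match nat_of_ord x with 0 => f0 | 1 => f1 | 2 => f2 | 3 => f3 | _ => f4 end.
Definition fromF (a : Fv) : 'F_5 :=
  match a with f0 => 0 | f1 => 1 | f2 => 2%:R | f3 => 3%:R | f4 => 4%:R end.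

Lemma F5_cases (x : 'F_5) : x = fromF f0 \/ x = fromF f1 \/ x = fromF f2 \/ x = fromF f3 \/ x = fromF f4.
Proof.
case: x => [[|[|[|[|[|n]]]]] Hn].
- by left; apply: val_inj.
- by right; left; apply: val_inj.
- by right; right; left; apply: val_inj.
- by right; right; right; left; apply: val_inj.
- by right; right; right; right; apply: val_inj.
- by [].
Qed.

Lemma toF_fromF a : toF (fromF a) = a.
Proof. by case: a. Qed.

Lemma fromF_toF x : fromF (toF x) = x.
Proof. by have [->|[->|[->|[->|->]]]] := F5_cases x. Qed.

Lemma toF_inj : injective toF.
Proof. by move=> x y E; rewrite -(fromF_toF x) E fromF_toF. Qed.

Lemma toF_add x y : toF (x + y) = addF (toF x) (toF y).
Proof.
by have [->|[->|[->|[->|->]]]] := F5_cases x; have [->|[->|[->|[->|->]]]] := F5_cases y.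
Qed.
Lemma toF_mul x y : toF (x * y) = mulF (toF x) (toF y).
Proof.
by have [->|[->|[->|[->|->]]]] := F5_cases x; have [->|[->|[->|[->|->]]]] := F5_cases y.
Qed.
Lemma toF_opp x : toF (- x) = oppF (toF x).
Proof. by have [->|[->|[->|[->|->]]]] := F5_cases x. Qed.
Lemma toF0 : toF 0 = f0. Proof. by []. Qed.
Lemma toF1 : toF 1 = f1. Proof. by []. Qed.

Definition i0 : 'I_3 := @Ordinal 3 0 isT.
Definition i1 : 'I_3 := @Ordinal 3 1 isT.
Definition i2 : 'I_3 := @Ordinal 3 2 isT.

Lemma ord3_cases (i : 'I_3) : i = i0 \/ i = i1 \/ i = i2.
Proof.
case: i => [[|[|[|n]]] Hn].
- by left; apply: val_inj.
- by right; left; apply: val_inj.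
- by right; right; apply: val_inj.
- by [].
Qed.

Lemma sum3 (F : 'I_3 -> 'F_5) : \sum_(k < 3) F k = F i0 + F i1 + F i2.
Proof.
rewrite !big_ord_recr big_ord0 /= add0r.
by congr (F _ + F _ + F _); apply: val_inj.
Qed.

Definition toM (A : 'M['F_5]_3) : cm :=
  CM (toF (A i0 i0)) (toF (A i0 i1)) (toF (A i0 i2))
     (toF (A i1 i0)) (toF (A i1 i1)) (toF (A i1 i2))
     (toF (A i2 i0)) (toF (A i2 i1)) (toF (A i2 i2)).

Lemma toM_mul A B : toM (A *m B) = cmul (toM A) (toM B).
Proof. by rewrite /toM !mxE !sum3 !toF_add !toF_mul. Qed.

Lemma toM_inj : injective toM.
Proof.
move=> A B; rewrite /toM => -[E00 E01 E02 E10 E11 E12 E20 E21 E22].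
apply/matrixP => i j; apply: toF_inj.
by have [->|[->|->]] := ord3_cases i; have [->|[->|->]] := ord3_cases j.
Qed.

Definition entry (c : cm) (i j : 'I_3) : Fv :=
  match nat_of_ord i, nat_of_ord j with
  | 0, 0 => e00 c | 0, 1 => e01 c | 0, _ => e02 c
  | 1, 0 => e10 c | 1, 1 => e11 c | 1, _ => e12 c
  | _, 0 => e20 c | _, 1 => e21 c | _, _ => e22 c end.

Definition fromM (c : cm) : 'M['F_5]_3 := \matrix_(i, j) fromF (entry c i j).

Lemma toM_fromM c : toM (fromM c) = c.
Proof. by rewrite /toM !mxE !toF_fromF; case: c. Qed.

Lemma toM1 : toM 1%:M = cI.
Proof. by rewrite /toM !mxE. Qed.

Notation GLT := {'GL_3['F_5]}.
Definition toG (u : GLT) : cm := toM (GLval u).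
Lemma toG_mul (u v : GLT) : toG (u * v)%g = cmul (toG u) (toG v).
Proof. by rewrite /toG GL_MxE toM_mul. Qed.
Lemma toG1 : toG (1%g : GLT) = cI.
Proof. by rewrite /toG GL_1E toM1. Qed.
Lemma toG_inj : injective toG.
Proof. by move=> u v /toM_inj E; apply: val_inj. Qed.

Lemma fromM_mul1 P Pi : cmul P Pi = cI -> fromM P *m fromM Pi = 1%:M.
Proof. by move=> H; apply: toM_inj; rewrite toM_mul !toM_fromM H toM1. Qed.

Lemma cmulA A B C : cmul A (cmul B C) = cmul (cmul A B) C.
Proof.
rewrite -(toM_fromM A) -(toM_fromM B) -(toM_fromM C) -!toM_mul.
by rewrite mulmxA.
Qed.

Lemma conjG_ex P Pi : cmul P Pi = cI ->
  exists x : GLT, toG x = P /\ forall u : GLT, toG (u ^ x)%g = cmul (cmul Pi (toG u)) P.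
Proof.
move=> H; have [Ux Uy] := mulmx1_unit (fromM_mul1 H).
pose x : GLT := FinRing.Unit Ux; pose y : GLT := FinRing.Unit Uy.
have Tx : toG x = P by rewrite /toG /= toM_fromM.
have Ty : toG y = Pi by rewrite /toG /= toM_fromM.
have xy : (x * y = 1)%g by apply: toG_inj; rewrite toG_mul Tx Ty H toG1.
have xV : (x^-1 = y)%g by apply/eqP; rewrite eq_invg_mul xy.
exists x; split => // u.
by rewrite /conjg xV !toG_mul Ty Tx cmulA.
Qed.

Lemma toG_expg2 (u : GLT) : toG (u ^+ 2)%g = cmul (toG u) (toG u).
Proof. by rewrite expgS expg1 toG_mul. Qed.
Lemma toG_expg3 (u : GLT) : toG (u ^+ 3)%g = cmul (toG u) (cmul (toG u) (toG u)).
Proof. by rewrite !expgS expg0 mulg1 !toG_mul. Qed.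
Lemma toG_expg5 (u : GLT) : toG (u ^+ 5)%g = pow5 (toG u).
Proof. by rewrite !expgS expg0 mulg1 !toG_mul. Qed.

Definition q0 : 'I_5 := @Ordinal 5 0 isT.
Definition q1 : 'I_5 := @Ordinal 5 1 isT.
Definition q2 : 'I_5 := @Ordinal 5 2 isT.
Definition q3 : 'I_5 := @Ordinal 5 3 isT.
Definition q4 : 'I_5 := @Ordinal 5 4 isT.

Definition Hf (a : 'I_5) (k : 'I_3) : 'F_5 :=
  if nat_of_ord a == 3%N then -1 else if nat_of_ord a == 4%N then 0
  else ((nat_of_ord a == nat_of_ord k) : nat)%:R.
Definition w3 (i : 'I_3) : 'I_5 := widen_ord (isT : (3 <= 5)%N) i.
Definition rho (s : {perm 'I_5}) : 'M['F_5]_3 :=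
  \matrix_(i, k) (Hf (s (w3 i)) k - Hf (s q4) k).

Lemma sum5 (F : 'I_5 -> 'F_5) : \sum_(a < 5) F a = F q0 + F q1 + F q2 + F q3 + F q4.
Proof.
rewrite !big_ord_recr big_ord0 /= add0r.
by congr (F _ + F _ + F _ + F _ + F _); apply: val_inj.
Qed.

Lemma sumH (t : {perm 'I_5}) k :
  Hf (t q0) k + Hf (t q1) k + Hf (t q2) k + Hf (t q3) k + Hf (t q4) k = 0.
Proof.
rewrite -(sum5 (fun a => Hf (t a) k)).
have -> : \sum_(a < 5) Hf (t a) k = \sum_(a < 5) Hf a k by rewrite [RHS](reindex_perm t).
rewrite sum5.
have [->|[->|->]] := ord3_cases k; by rewrite /Hf /=; apply: val_inj.
Qed.

Lemma w3_0 : w3 i0 = q0. Proof. exact: val_inj. Qed.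
Lemma w3_1 : w3 i1 = q1. Proof. exact: val_inj. Qed.
Lemma w3_2 : w3 i2 = q2. Proof. exact: val_inj. Qed.

Lemma ord5_cases (a : 'I_5) : a = q0 \/ a = q1 \/ a = q2 \/ a = q3 \/ a = q4.
Proof.
case: a => [[|[|[|[|[|n]]]]] Hn].
- by left; apply: val_inj.
- by right; left; apply: val_inj.
- by right; right; left; apply: val_inj.
- by right; right; right; left; apply: val_inj.
- by right; right; right; right; apply: val_inj.
- by [].
Qed.

Lemma key2 (t : {perm 'I_5}) (a : 'I_5) (k : 'I_3) :
  Hf a i0 * (Hf (t q0) k - Hf (t q4) k) + Hf a i1 * (Hf (t q1) k - Hf (t q4) k)
  + Hf a i2 * (Hf (t q2) k - Hf (t q4) k) = Hf (t a) k - Hf (t q4) k.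
Proof.
have S := sumH t k.
have [->|[->|[->|[->|->]]]] := ord5_cases a;
move: S; set x0 := Hf (t q0) k; set x1 := Hf (t q1) k; set x2 := Hf (t q2) k;
  set x3 := Hf (t q3) k; set x4 := Hf (t q4) k => S; rewrite /Hf /=; try ring.
apply/eqP; rewrite -subr_eq0; apply/eqP.
transitivity (-(x0+x1+x2+x3+x4) + 5%:R * x4); first ring.
rewrite S (_ : 5%:R = 0 :> 'F_5); last by apply: val_inj.
by rewrite mul0r oppr0 addr0.
Qed.

Lemma rhoM (s t : {perm 'I_5}) : rho (s * t)%g = rho s *m rho t.
Proof.
apply/matrixP => i k; rewrite !mxE sum3 !mxE !permM.
have A := key2 t (s (w3 i)) k; have B := key2 t (s q4) k.
rewrite w3_0 w3_1 w3_2.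
rewrite (_ : Hf (t (s (w3 i))) k - Hf (t (s q4)) k =
  (Hf (t (s (w3 i))) k - Hf (t q4) k) - (Hf (t (s q4)) k - Hf (t q4) k)); last by ring.
rewrite -A -B; ring.
Qed.

Lemma rho1 : rho 1%g = 1%:M.
Proof.
apply/matrixP => i k; rewrite !mxE !perm1.
by have [->|[->|->]] := ord3_cases i; have [->|[->|->]] := ord3_cases k; apply: val_inj.
Qed.

Lemma rho_unit (s : {perm 'I_5}) : rho s \in unitmx.
Proof.
have E : rho s *m rho s^-1%g = 1%:M by rewrite -rhoM mulgV rho1.
by case: (mulmx1_unit E).
Qed.

Definition rhoG (s : {perm 'I_5}) : GLT := FinRing.Unit (rho_unit s).

Lemma rhoG_mul s t : rhoG (s * t)%g = (rhoG s * rhoG t)%g.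
Proof. by apply: val_inj; rewrite /= rhoM. Qed.

Lemma toG_rhoG s : toG (rhoG s) = toM (rho s).
Proof. by []. Qed.

Definition sA : {perm 'I_5} := (tperm q0 q1 * tperm q2 q3)%g.
Definition tA : {perm 'I_5} := (tperm q0 q2 * tperm q2 q4)%g.

Lemma rho_sA : toM (rho sA) = g1c.
Proof. by rewrite /toM !mxE /sA !permM /tperm !permE. Qed.
Lemma rho_tA : toM (rho tA) = g2c.
Proof. by rewrite /toM !mxE /tA !permM /tperm !permE. Qed.
Local Open Scope group_scope.

Notation Alt5 := ('Alt_('I_5))%G.
Canonical rhoGm := @Morphism _ _ [set: {perm 'I_5}] rhoG (in2W rhoG_mul).

Lemma sA_Alt : sA \in Alt5.
Proof. by rewrite Alt_even /sA odd_permM !odd_tperm. Qed.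
Lemma tA_Alt : tA \in Alt5.
Proof. by rewrite Alt_even /tA odd_permM !odd_tperm. Qed.

Lemma simpleAlt : simple Alt5.
Proof. by apply: simple_Alt5; rewrite card_ord. Qed.

Lemma g1c_neq : g1c <> cI. Proof. by []. Qed.

Lemma rho_inj_Alt s : s \in Alt5 -> rhoG s = 1%g -> s = 1%g.
Proof.
move=> As rs1.
have nK : (Alt5 :&: 'ker rhoGm)%G <| Alt5.
  by apply: normalGI; [exact: subsetT | exact: ker_normal].
have [_ simp] := simpleP _ simpleAlt.
case: (simp _ nK) => /= E.
  have : s \in (Alt5 :&: 'ker rhoGm)%g.
    by rewrite inE As; apply/kerP; rewrite ?inE.
  by rewrite E => /set1P.
have : sA \in (Alt5 :&: 'ker rhoGm)%g by rewrite E sA_Alt.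
rewrite inE => /andP[_ /kerP] => /(_ (in_setT _)) /= H.
by have := toG_rhoG sA; rewrite H toG1 rho_sA.
Qed.

Lemma mI_unit : fromM mI \in unitmx.
Proof. by case: (mulmx1_unit (@fromM_mul1 mI mI erefl)). Qed.
Definition mIG : GLT := FinRing.Unit mI_unit.
Lemma toG_mIG : toG mIG = mI.
Proof. by rewrite /toG /= toM_fromM. Qed.

Lemma toM_m1 : toM ((-1)%R%:M) = mI.
Proof. by rewrite /toM !mxE. Qed.

Lemma cmul_mI M : cmul mI M = cmul M mI.
Proof.
rewrite -toM_m1 -(toM_fromM M) -!toM_mul.
by rewrite scalar_mxC.
Qed.

Lemma mIG_central (u : GLT) : mIG * u = u * mIG.
Proof. by apply: toG_inj; rewrite !toG_mul toG_mIG cmul_mI. Qed.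

Lemma mIG2 : mIG * mIG = 1.
Proof. by apply: toG_inj; rewrite toG_mul toG_mIG toG1. Qed.

Lemma rhoG1 : rhoG 1 = 1.
Proof. by apply: val_inj; rewrite /= rho1. Qed.
Lemma rhoGV s : rhoG s^-1 = (rhoG s)^-1.
Proof. by apply/eqP; rewrite eq_sym eq_invg_mul -rhoG_mul mulgV rhoG1. Qed.

Lemma rho_center s : s \in Alt5 -> rhoG s = mIG -> False.
Proof.
move=> As rs.
have comm : forall t, t \in Alt5 -> s * t = t * s.
  move=> t At; apply/eqP; rewrite eq_mulgV1; apply/eqP.
  apply: rho_inj_Alt; first by rewrite !(groupM, groupV).
  by rewrite !rhoG_mul rhoGV rhoG_mul rs mIG_central mulgV.
have [_ simp] := simpleP _ simpleAlt.
have Zs : s \in 'Z(Alt5).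
  by apply/centerP; split => // t At; apply/commgP/commgP; rewrite /commute comm.
case: (simp _ (center_normal Alt5)) => E.
  move: Zs; rewrite E => /set1P Es.
  by have := toG_mIG; rewrite -rs Es rhoG1 toG1.
have : sA \in 'Z(Alt5) by rewrite E sA_Alt.
move/centerP => [_ /(_ tA tA_Alt)] H.
have : toG (rhoG (sA * tA)) = toG (rhoG (tA * sA)) by rewrite H.
by rewrite (rhoG_mul sA tA) (rhoG_mul tA sA) !toG_mul !toG_rhoG rho_sA rho_tA.
Qed.

Lemma rhoG_X s n : rhoG (s ^+ n) = (rhoG s) ^+ n.
Proof. by elim: n => [|n IH]; rewrite ?expg0 ?rhoG1 // !expgS rhoG_mul IH. Qed.

Lemma orderP p s M : prime p -> s \in Alt5 -> toM (rho s) = M ->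
  toG ((rhoG s) ^+ p) = cI -> M <> cI -> #[s] = p.
Proof.
move=> pp As Es Ep nM; apply: nt_prime_order => //.
  apply: rho_inj_Alt; first by rewrite groupX.
  by rewrite rhoG_X; apply: toG_inj; rewrite Ep toG1.
apply/eqP => E; apply: nM; by rewrite -Es E rho1 toM1.
Qed.

Lemma rho_sAtA : toM (rho (sA * tA)) = cmul g1c g2c.
Proof. by rewrite rhoM toM_mul rho_sA rho_tA. Qed.

Lemma ord_sA : #[sA] = 2%N.
Proof.
apply: (orderP (M := g1c)) => //; first exact: sA_Alt; first exact: rho_sA.
by rewrite toG_expg2 toG_rhoG rho_sA.
Qed.
Lemma ord_tA : #[tA] = 3%N.
Proof.
apply: (orderP (M := g2c)) => //; first exact: tA_Alt; first exact: rho_tA.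
by rewrite toG_expg3 toG_rhoG rho_tA.
Qed.
Lemma ord_sAtA : #[sA * tA] = 5%N.
Proof.
apply: (orderP (M := cmul g1c g2c)) => //; first by rewrite groupM ?sA_Alt ?tA_Alt.
  exact: rho_sAtA.
by rewrite toG_expg5 toG_rhoG rho_sAtA.
Qed.

Lemma card_Alt5 : #|Alt5| = 60%N.
Proof.
have := card_Alt (T := 'I_5); rewrite card_ord => /(_ isT) /eqP.
by rewrite -[(5`!)%N]/(2 * 60)%N eqn_pmul2l // => /eqP.
Qed.

Lemma gen_Alt : <<[set sA; tA]>> = Alt5 :> {set {perm 'I_5}}.
Proof.
set P := <<[set sA; tA]>>%G.
have sPA : P \subset Alt5.
  by rewrite gen_subG subUset !sub1set sA_Alt tA_Alt.
have PsA : sA \in P by rewrite mem_gen // set21.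
have PtA : tA \in P by rewrite mem_gen // set22.
have d2 : (2 %| #|P|)%N by move: (order_dvdG PsA); rewrite ord_sA.
have d3 : (3 %| #|P|)%N by move: (order_dvdG PtA); rewrite ord_tA.
have d5 : (5 %| #|P|)%N by move: (order_dvdG (groupM PsA PtA)); rewrite ord_sAtA.
have d30 : (30 %| #|P|)%N.
  have : (lcmn (lcmn 2 3) 5 %| #|P|)%N by rewrite !dvdn_lcm d2 d3 d5.
  by [].
have d60 : (#|P| %| 60)%N by rewrite -card_Alt5 cardSg.
have [simpnt simp] := simpleP _ simpleAlt.
case/dvdnP: d30 => k Ek.
have k2 : (k %| 2)%N by rewrite -(@dvdn_pmul2r 30) // -Ek.
have := @dvdn_leq k 2 isT k2; case: k Ek k2 => [|[|[|k]]] Ek k2 //.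
- move=> _; have idx : #|Alt5 : P| = 2%N.
    have := Lagrange sPA; rewrite Ek card_Alt5 => /eqP.
    by rewrite -[60%N]/(30 * 2)%N eqn_pmul2l // => /eqP.
  have nP := index2_normal sPA idx.
  case: (simp _ nP) => E.
    by move: Ek; rewrite E cards1.
  by move: Ek; rewrite E card_Alt5.
- move=> _; apply/eqP; rewrite eqEcard sPA card_Alt5 Ek //.
Qed.

Definition sgnG (z : 'Z_2) : GLT := if nat_of_ord z == 0%N then 1 else mIG.

Lemma sgnG_mul z1 z2 : sgnG (z1 * z2) = sgnG z1 * sgnG z2.
Proof.
case: z1 => [[|[|?]] ?] //; case: z2 => [[|[|?]] ?] //; rewrite /sgnG /=.
all: by rewrite ?mulg1 ?mul1g ?mIG2.
Qed.

Lemma sgnG_central z u : sgnG z * u = u * sgnG z.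
Proof. by rewrite /sgnG; case: ifP => _; rewrite ?mul1g ?mulg1 ?mIG_central. Qed.

Definition phi (p : {perm 'I_5} * 'Z_2) : GLT := rhoG p.1 * sgnG p.2.

Lemma phi_mul p q : phi (p * q) = phi p * phi q.
Proof.
case: p q => [s z] [t w]; rewrite /phi /= rhoG_mul sgnG_mul.
by rewrite -!mulgA; congr (_ * _); rewrite !mulgA sgnG_central.
Qed.

Lemma phi1 : phi 1 = 1.
Proof. by rewrite /phi /= rhoG1 mul1g. Qed.

Canonical phiM := @Morphism _ _ [set: {perm 'I_5} * 'Z_2] phi (in2W phi_mul).
Definition phiR := restrm (subsetT A5xC2) phiM.
Definition G0 := (phiR @* A5xC2)%G.

Lemma phi_triv d : d \in A5xC2 -> phi d = 1 -> d = 1.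
Proof.
case: d => s z; rewrite /A5xC2 /= in_setX => /andP[As _].
rewrite /phi /sgnG /=; case: z => [[|[|?]] Hz] //=.
  by rewrite mulg1 => /(rho_inj_Alt As) ->; congr (_, _); apply: val_inj.
move=> E; exfalso; apply: (rho_center As).
by rewrite -[rhoG s]mulg1 -mIG2 mulgA E mul1g.
Qed.

Lemma injf0 : 'injm phiR.
Proof.
apply/injmP => x y Dx Dy; rewrite /phiR /= => E; change (phi x = phi y) in E.
apply/eqP; rewrite eq_mulgV1; apply/eqP; apply: phi_triv.
  by rewrite groupM ?groupV.
have Vy : phi y^-1 = (phi y)^-1.
  by apply/eqP; rewrite eq_sym eq_invg_mul -phi_mul mulgV phi1.
by rewrite phi_mul Vy E mulgV.
Qed.

Lemma G0_isog : (G0 \isog A5xC2)%g.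
Proof. by rewrite isog_sym; apply: sub_isog => //; exact: injf0. Qed.

Definition z1 : 'Z_2 := @Ordinal 2 1 isT.
Definition sA' : {perm 'I_5} * 'Z_2 := (sA, 1).
Definition tA' : {perm 'I_5} * 'Z_2 := (tA, 1).
Definition cc : {perm 'I_5} * 'Z_2 := (1, z1).

Lemma pair1X (x : {perm 'I_5}) n : (x, 1 : 'Z_2) ^+ n = (x ^+ n, 1).
Proof.
elim: n => [|n IH]; first by rewrite !expg0.
rewrite !expgS IH; change ((x * x ^+ n, 1 * 1) = (x * x ^+ n, 1 : 'Z_2)); by rewrite mulg1.
Qed.

Lemma z1_in : z1 \in Zp 2. Proof. by rewrite /Zp /= inE. Qed.
Lemma DsA : sA' \in A5xC2. Proof. by rewrite /A5xC2 /= in_setX sA_Alt group1. Qed.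
Lemma DtA : tA' \in A5xC2. Proof. by rewrite /A5xC2 /= in_setX tA_Alt group1. Qed.
Lemma Dcc : cc \in A5xC2. Proof. by rewrite /A5xC2 /= in_setX group1 z1_in. Qed.

Lemma gen_D : A5xC2 \subset <<[set sA'; tA'; cc]>>.
Proof.
apply/subsetP => -[s z]; rewrite /A5xC2 /= in_setX => /andP[As _].
have -> : (s, z) = (s, 1) * (1, z) by change ((s, z) = (s * 1, 1 * z)); rewrite mulg1 mul1g.
apply: groupM.
  rewrite -gen_Alt in As.
  have := mem_morphim (pairg1_morphism _ 'Z_2) (in_setT s) As.
  rewrite morphim_gen ?subsetT // => Hs.
  apply: (subsetP _ _ Hs); apply: genS; apply/subsetP => y /morphimP[x _ Hx ->].
  by case/set2P: Hx => ->; rewrite !inE eqxx ?orbT.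
case: z => [[|[|?]] Hz] //.
  by rewrite (_ : (1, Ordinal Hz) = 1) ?group1 //; congr (_, _); apply: val_inj.
by apply: mem_gen; rewrite (_ : (1, Ordinal Hz) = cc) ?inE ?eqxx ?orbT //; congr (_, _); apply: val_inj.
Qed.

Lemma toG_phi1 s : toG (phi (s, 1)) = toM (rho s).
Proof. by rewrite /phi /sgnG /= mulg1. Qed.
Lemma toG_phisA : toG (phi sA') = g1c.
Proof. by rewrite toG_phi1 rho_sA. Qed.
Lemma toG_phitA : toG (phi tA') = g2c.
Proof. by rewrite toG_phi1 rho_tA. Qed.
Lemma toG_phicc : toG (phi cc) = mI.
Proof. by rewrite /phi /sgnG /= rhoG1 mul1g toG_mIG. Qed.

Lemma phi_in d : d \in A5xC2 -> phi d \in G0.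
Proof. by move=> Dd; exact: (mem_morphim phiR Dd Dd). Qed.

Lemma sA'2 : sA' ^+ 2 = 1.
Proof. by rewrite /sA' pair1X; have := expg_order sA; rewrite ord_sA => ->. Qed.
Lemma tA'3 : tA' ^+ 3 = 1.
Proof. by rewrite /tA' pair1X; have := expg_order tA; rewrite ord_tA => ->. Qed.
Lemma sAtA'5 : (sA' * tA') ^+ 5 = 1.
Proof.
rewrite (_ : sA' * tA' = (sA * tA, 1)); last first.
  by change ((sA * tA, 1 * 1) = (sA * tA, 1 : 'Z_2)); rewrite mulg1.
by rewrite pair1X; have := expg_order (sA * tA); rewrite ord_sAtA => ->.
Qed.
Lemma cc2 : cc ^+ 2 = 1.
Proof. by rewrite expgS expg1; congr (_, _); [rewrite mulg1 | apply: val_inj]. Qed.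
Lemma cc_sA : cc * sA' = sA' * cc.
Proof. by change ((1 * sA, z1 * 1) = (sA * 1, 1 * z1)); rewrite mulg1 mul1g mulg1 mul1g. Qed.
Lemma cc_tA : cc * tA' = tA' * cc.
Proof. by change ((1 * tA, z1 * 1) = (tA * 1, 1 * z1)); rewrite mulg1 mul1g mulg1 mul1g. Qed.

Lemma sA'_neq1 : sA' != 1.
Proof.
apply/eqP => -[E]; have := ord_sA; rewrite E order1 => //.
Qed.
Lemma tA'_neq1 : tA' != 1.
Proof. by apply/eqP => -[E]; have := ord_tA; rewrite E order1. Qed.
Lemma cc_neq1 : cc != 1.
Proof. by apply/eqP => E; have := congr1 (fun p : {perm 'I_5} * 'Z_2 => nat_of_ord p.2) E. Qed.

Lemma conj_main (f : {morphism A5xC2 >-> GLT}) : 'injm f ->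
  exists x : GLT, [/\ f sA' ^ x = phi sA', f tA' ^ x = phi tA' & f cc ^ x = phi cc].
Proof.
move=> injf.
set A := f sA'; set B := f tA'; set Z := f cc.
have A2 : A ^+ 2 = 1 by rewrite -morphX ?DsA // sA'2 morph1.
have B3 : B ^+ 3 = 1 by rewrite -morphX ?DtA // tA'3 morph1.
have AB5 : (A * B) ^+ 5 = 1 by rewrite -morphM ?DsA ?DtA // -morphX ?groupM ?DsA ?DtA // sAtA'5 morph1.
have Z2 : Z ^+ 2 = 1 by rewrite -morphX ?Dcc // cc2 morph1.
have ZA : Z * A = A * Z by rewrite -!morphM ?DsA ?Dcc // cc_sA.
have ZB : Z * B = B * Z by rewrite -!morphM ?DtA ?Dcc // cc_tA.
have nA : A != 1 by apply: contra sA'_neq1 => /eqP /(injm1 injf DsA) ->.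
have nB : B != 1 by apply: contra tA'_neq1 => /eqP /(injm1 injf DtA) ->.
have nZ : Z != 1 by apply: contra cc_neq1 => /eqP /(injm1 injf Dcc) ->.
have neqI : forall u : GLT, u != 1 -> toG u <> cI.
  by move=> u /eqP nu E; apply: nu; apply: toG_inj; rewrite E toG1.
have A2' : cmul (toG A) (toG A) = cI by rewrite -toG_expg2 A2 toG1.
have [P [HP HX]] := P1spec (neqI _ nA) A2'.
have [x1 [_ Hx1]] := conjG_ex HP.
set D := cmul (cmul (cinv P) (toG A)) P.
have TA1 : toG (A ^ x1) = D by rewrite Hx1.
have nB1 : B ^ x1 != 1 by rewrite conjg_eq1.
have B13 : toG (B ^ x1) = cI -> False by move=> E; apply: (neqI _ nB1).
have B3' : cmul (toG (B ^ x1)) (cmul (toG (B ^ x1)) (toG (B ^ x1))) = cI.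
  by rewrite -toG_expg3 -conjXg B3 conj1g toG1.
have AB5' : pow5 (cmul D (toG (B ^ x1))) = cI.
  by rewrite -TA1 -toG_mul -toG_expg5 -conjMg -conjXg AB5 conj1g toG1.
have [DD1 [Q [Qi [HQ [HQ1 HQ2]]]]] := P2spec (neqI _ nB1) B3' AB5' HX.
have [x2 [_ Hx2]] := conjG_ex HQ.
exists (x1 * x2).
have EA : A ^ (x1 * x2) = phi sA'.
  by apply: toG_inj; rewrite conjgM Hx2 TA1 DD1 HQ1 toG_phi1 rho_sA.
have EB : B ^ (x1 * x2) = phi tA'.
  by apply: toG_inj; rewrite conjgM Hx2 HQ2 toG_phi1 rho_tA.
split => //.
have nZx : Z ^ (x1 * x2) != 1 by rewrite conjg_eq1.
have Zx2 : toG (Z ^ (x1 * x2)) <> cI -> cmul (toG (Z ^ (x1 * x2))) (toG (Z ^ (x1 * x2))) = cI -> Z ^ (x1 * x2) = phi cc.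
  have C1 : cmul (toG (Z ^ (x1 * x2))) g1c = cmul g1c (toG (Z ^ (x1 * x2))).
    by rewrite -toG_phisA -!toG_mul -EA -!conjMg ZA.
  have C2 : cmul (toG (Z ^ (x1 * x2))) g2c = cmul g2c (toG (Z ^ (x1 * x2))).
    by rewrite -toG_phitA -!toG_mul -EB -!conjMg ZB.
  have [a Ea] := P3spec C1 C2.
  move=> H1 H2; apply: toG_inj; rewrite toG_phicc Ea.
  move: H1 H2; rewrite Ea; clear Ea.
  by case: a.
apply: Zx2; first exact: neqI.
by rewrite -toG_expg2 -conjXg Z2 conj1g toG1.
Qed.

Theorem lemma3p17 :
  exists G : {group {'GL_3['F_5]}},
    (G \isog A5xC2)%g /\
    forall H : {group {'GL_3['F_5]}},
      (H \isog A5xC2)%g -> exists2 x, x \in ('GL_3['F_5])%g & H :=: (G :^ x)%g.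
Proof.
exists G0; split; first exact: G0_isog.
move=> H; rewrite isog_sym => /isogP[f injf fD].
have [x [EA EB EZ]] := conj_main injf.
exists x^-1; first exact: in_setT.
have sHG : H \subset G0 :^ x^-1.
  rewrite -fD; apply: subset_trans (morphimS f gen_D) _.
  rewrite morphim_gen; last first.
    apply/subsetP => y Hy; have : (y == sA') || (y == tA') || (y == cc) by move: Hy; rewrite !inE.
    by move=> /orP[/orP[]|] /eqP ->; [exact: DsA | exact: DtA | exact: Dcc].
  rewrite gen_subG; apply/subsetP => y /morphimP[d _ Sd ->].
  rewrite mem_conjgV.
  have : (d == sA') || (d == tA') || (d == cc) by move: Sd; rewrite !inE.
  by move=> /orP[/orP[]|] /eqP ->; rewrite ?EA ?EB ?EZ phi_in ?DsA ?DtA ?Dcc.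
apply/eqP; rewrite eqEcard sHG cardJg.
by rewrite /G0 /= -fD (card_injm injf0) ?(card_injm injf).
Qed.
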